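(* Let $K$ be a field and let $n\ge 1$ be an integer. Then the multiplicative monoid $M_n(K)$ of all $n\times n$ matrices with entries in $K$ is sofic.
   Context: For a non-empty finite set $X$, $\mathrm{Map}(X)$ is the monoid of all maps $X\to X$ under composition (identity $\mathrm{Id}_X$) with the Hamming metric $d_X(f,g)=|\{x\in X : f(x)\ne g(x)\}|/|X|$. For a monoid $M$ with identity $1_M$, finite $F\subset M$ and $\varepsilon,\alpha>0$, a map $\varphi\colon M\to\mathrm{Map}(X)$ is an $(F,\varepsilon)$-morphism if $d_X(\varphi(k_1k_2),\varphi(k_1)\varphi(k_2))\le\varepsilon$ for all $k_1,k_2\in F$ and $d_X(\varphi(1_M),\mathrm{Id}_X)\le\varepsilon$; it is $(F,\alpha)$-injective if $d_X(\varphi(k_1),\varphi(k_2))\ge\alpha$ for all distinct $k_1,k_2\in F$. $M$ is sofic if for every finite $F\subset M$ and every $\varepsilon>0$ there exist a non-empty finite set $X$ and an $(F,1-\varepsilon)$-injective $(F,\varepsilon)$-morphism $\varphi\colon M\to\mathrm{Map}(X)$. *)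

(* Defs.v *)
From HB Require Import structures.
From mathcomp Require Import all_boot all_order all_algebra.
Set Implicit Arguments. Unset Strict Implicit. Unset Printing Implicit Defensive.
Import Order.TTheory GRing.Theory Num.Theory.
Local Open Scope ring_scope.

Definition hamming (X : finType) (f g : X -> X) : rat :=
  (#|[set x | f x != g x]|)%:R / (#|X|)%:R.

Definition approx_morphism (M : eqType) (mul : M -> M -> M) (one : M)
    (X : finType) (F : seq M) (eps : rat) (phi : M -> X -> X) : Prop :=
  (forall k1 k2, k1 \in F -> k2 \in F ->
     hamming (phi (mul k1 k2)) (fun x => phi k1 (phi k2 x)) <= eps) /\
  hamming (phi one) (fun x => x) <= eps.

Definition approx_injective (M : eqType) (X : finType) (F : seq M)
    (alpha : rat) (phi : M -> X -> X) : Prop :=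
  forall k1 k2, k1 \in F -> k2 \in F -> k1 != k2 ->
    alpha <= hamming (phi k1) (phi k2).

Definition sofic (M : eqType) (mul : M -> M -> M) (one : M) : Prop :=
  forall (F : seq M) (eps : rat), 0 < eps ->
    exists (X : finType) (phi : M -> X -> X),
      (0 < #|X|)%N /\
      approx_morphism mul one F eps phi /\
      approx_injective F (1 - eps) phi.

(* Main.v *)
Require Import Defs.
From HB Require Import structures.
From mathcomp Require Import all_boot all_order all_algebra all_field.
From Stdlib Require Import Classical.
From mathcomp Require Import ring lra zify.
From Stdlib Require Import ClassicalEpsilon.
Import GRing.Theory Num.Theory.
Local Open Scope ring_scope.

Definition good (A : comNzRingType) (K : fieldType) (f : {rmorphism A -> K}) : Prop :=
  forall cs : seq A, (forall c, c \in cs -> f c != 0) ->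
  exists (k : finFieldType) (psi : {rmorphism A -> k}),
    (forall a, f a = 0 -> psi a = 0) /\ (forall c, c \in cs -> psi c != 0).
Arguments good {A K}.

Lemma ext_root (k : finFieldType) (p : {poly k}) : (1 < size p)%N ->
  exists (L : finFieldType) (i : {rmorphism k -> L}) (a : L), root (map_poly i p) a.
Proof.
move=> sp; have nz : p != 0 by rewrite -size_poly_gt0 ltnW.
have [L [rs Dp _]] := FinSplittingFieldFor nz.
exists (FinFieldExtType L), (in_alg (finvect_type L)).
case: rs Dp => [|r rs] Dp.
  move: (eqp_size Dp); rewrite big_nil size_poly1 size_map_poly => e.
  by rewrite e in sp.
exists r; rewrite (eqp_root Dp) root_prod_XsubC mem_head //.
Qed.

Definition cfun (A : nzRingType) (L : comNzRingType) (g : {rmorphism A -> L}) (a : L) :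
  commr_rmorph g a := fun b => mulrC a (g b).
Arguments cfun {A L}.
Notation hm g a := (horner_morph (cfun g a)).

Lemma kerP (A : nzRingType) (K L : nzRingType) (f : {rmorphism A -> K})
  (psi : {rmorphism A -> L}) : (forall a, f a = 0 -> psi a = 0) ->
  forall p, map_poly f p = 0 -> map_poly psi p = 0.
Proof.
move=> hk p hp; apply/polyP => i; rewrite coef_map coef0; apply: hk.
by rewrite -coef_map hp coef0.
Qed.

Lemma ex_min (P : nat -> Prop) : (exists n, P n) -> exists n, P n /\ forall m, P m -> (n <= m)%N.
Proof.
move=> [n Pn]; elim/ltn_ind: n Pn => n IH Pn.
case: (classic (exists m, P m /\ (m < n)%N)) => [[m [Pm lt]]|h].
  exact: IH m lt Pm.
exists n; split => // m Pm; rewrite leqNgt; apply/negP => lt; apply: h; exists m; by split.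
Qed.

Lemma pdiv_ex (A : comNzRingType) (m d : {poly A}) : d != 0 ->
  exists k q r, lead_coef d ^+ k *: m = q * d + r /\ (size r < size d)%N.
Proof.
move=> dn0; case: (Pdiv.ComRing.redivpP m d) => k q r h1 h2.
by exists k, q, r; split => //; exact: h2.
Qed.

Arguments pdiv_ex {A} m d.
Section Trunc.
Variables (A : nzRingType) (K : idomainType) (f : {rmorphism A -> K}).
Definition tr (p : {poly A}) := \poly_(i < size (map_poly f p)) p`_i.
Lemma tr_map p : map_poly f (tr p) = map_poly f p.
Proof.
apply/polyP => i; rewrite !coef_map coef_poly; case: ltnP => // h.
by rewrite raddf0 -coef_map nth_default.
Qed.
Lemma tr_size p : map_poly f p != 0 ->
  size (tr p) = size (map_poly f p) /\ f (lead_coef (tr p)) = lead_coef (map_poly f p).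
Proof.
move=> hp.
have sp : (0 < size (map_poly f p))%N by rewrite size_poly_gt0.
have e : (tr p)`_(size (map_poly f p)).-1 = p`_(size (map_poly f p)).-1.
  by rewrite coef_poly prednK // leqnn.
have hs : size (tr p) = size (map_poly f p).
  have h1 : (size (tr p) <= size (map_poly f p))%N by apply: size_poly.
  apply/eqP; rewrite eqn_leq h1 /=.
  rewrite -[X in (X <= _)%N](prednK sp) ltnNge; apply/negP => /leq_sizeP /(_ _ (leqnn _)).
  rewrite e => h; move: hp; rewrite -lead_coef_eq0 lead_coefE coef_map h raddf0 eqxx //.
split => //; rewrite lead_coefE hs e -coef_map lead_coefE //.
Qed.
End Trunc.
Arguments tr {A K} f p.
Arguments tr_size {A K f p}.
Arguments tr_map {A K} f p.
Lemma size_map_leq (A B : nzRingType) (f : {rmorphism A -> B}) (p : {poly A}) :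
  (size (map_poly f p) <= size p)%N.
Proof. by rewrite map_polyE (leq_trans (size_Poly _)) ?size_map. Qed.
Arguments size_map_leq {A B}.
Arguments kerP {A K L f psi}.
Arguments ext_root {k p}.
Lemma intr_eq0_pchar (R : nzRingType) p (z : int) : p \in [pchar R] ->
  (z%:~R == 0 :> R) = (p %| `|z|)%N.
Proof.
move=> hp; case: z => n.
  by rewrite /= (dvdn_pcharf hp).
by rewrite NegzE mulrNz oppr_eq0 /= (dvdn_pcharf hp).
Qed.
Arguments intr_eq0_pchar {R p} z.
Lemma good_int (K : fieldType) : good (intr : {rmorphism int -> K}).
Proof.
move=> cs hcs.
case: (classic (exists p, p \in [pchar K])) => [[p hp]|hn].
  have pp : prime p := pcharf_prime hp.
  have hF := pchar_Fp pp.
  exists ('F_p : finFieldType), (intr : {rmorphism int -> 'F_p}); split.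
    by move=> a /= /eqP; rewrite (intr_eq0_pchar _ hp) -(intr_eq0_pchar _ hF) => /eqP.
  by move=> c /hcs /=; rewrite (intr_eq0_pchar _ hp) -(intr_eq0_pchar _ hF).
have h0 (z : int) : z%:~R = 0 :> K -> z = 0.
  move=> /eqP; case: z => n /=.
    case: n => // n /natf0_pchar [] // q hq; case: hn; by exists q.
  rewrite NegzE mulrNz oppr_eq0 => /natf0_pchar [] // q hq; case: hn; by exists q.
have [p hp pp] := prime_above (\sum_(c <- cs) `|c|)%N.
have hF := pchar_Fp pp.
exists ('F_p : finFieldType), (intr : {rmorphism int -> 'F_p}); split.
  by move=> a /= /h0 ->.
move=> c cin; rewrite /= (intr_eq0_pchar _ hF).
have cn0 : c != 0 by apply: contra (hcs c cin) => /eqP ->.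
apply/negP => /(dvdn_leq); rewrite absz_gt0 cn0 => /(_ isT) hle.
have : (`|c| <= \sum_(c <- cs) `|c|)%N.
  by rewrite (big_rem c cin) /= leq_addr.
by move=> h; move: (leq_trans hle h); rewrite leqNgt hp.
Qed.

Lemma choose_list (A B : eqType) (P : A -> B -> Prop) (cs : seq A) :
  (forall c, c \in cs -> exists D, P c D) ->
  exists Ds : seq B, (forall c, c \in cs -> exists D, D \in Ds /\ P c D) /\
     (forall D, D \in Ds -> exists c, P c D).
Proof.
elim: cs => [|c cs IH] h; first by exists [::]; split.
have [D hD] := h c (mem_head _ _).
have [Ds [hDs1 hDs2]] := IH (fun c' hc' => h c' (@mem_behead _ (c :: cs) _ hc')).
exists (D :: Ds); split.
  move=> c'; rewrite in_cons => /orP [/eqP ->|hc']; first by exists D; rewrite mem_head.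
  by have [D' [? ?]] := hDs1 c' hc'; exists D'; rewrite in_cons; split => //; apply/orP; right.
move=> D'; rewrite in_cons => /orP [/eqP ->|hD']; first by exists c.
exact: hDs2.
Qed.
Arguments choose_list {A B P cs}.

Section Step.
Variables (A : comNzRingType) (K : fieldType) (f : {rmorphism A -> K}) (x : K).
Local Notation fx := (hm f x).
Lemma fxE p : fx p = (map_poly f p).[x]. Proof. by []. Qed.

Section Key.
Variable g0 : {poly A}.
Let d := size (map_poly f g0).
Hypothesis hg0 : map_poly f g0 != 0.
Hypothesis rg0 : fx g0 = 0.
Hypothesis hmin : forall h, map_poly f h != 0 -> fx h = 0 -> (d <= size (map_poly f h))%N.

Lemma key n : forall r, size (map_poly f r) = n -> map_poly f r != 0 -> (n < d)%N ->
  exists U V D, f D != 0 /\ map_poly f (U * r + V * g0 - D%:P) = 0.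
Proof.
elim/ltn_ind: n => n IH r srn rn0 nd.
have rx : fx r != 0.
  by apply/eqP => h; have := hmin r rn0 h; rewrite srn leqNgt nd.
have n0 : (0 < n)%N by rewrite -srn size_poly_gt0.
case: (leqP n 1) => n1.
  have e1 : map_poly f r = (f r`_0)%:P.
    by rewrite [LHS]size1_polyC ?srn // coef_map.
  exists 1, 0, r`_0; split.
    by apply: contra rn0 => /eqP h; rewrite e1 h.
  by rewrite mul0r addr0 mul1r rmorphB /= map_polyC /= e1 subrr.
have [sr' lr'] := tr_size rn0.
set r' := tr f r in sr' lr'.
have r'0 : r' != 0 by rewrite -size_poly_gt0 sr' srn.
have [k [Q [s0 [e ss]]]] := pdiv_ex g0 r' r'0.
set rho := lead_coef r' in e lr'.
have frho : f rho != 0 by rewrite lr' lead_coef_eq0.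
rewrite -mul_polyC in e.
have ef : (f rho ^+ k)%:P * map_poly f g0 = map_poly f Q * map_poly f r + map_poly f s0.
  have := congr1 (map_poly f) e.
  by rewrite rmorphD /= !rmorphM /= map_polyC /= rmorphXn /= tr_map.
have hs0 : map_poly f s0 != 0.
  apply/eqP => hs; rewrite hs addr0 in ef.
  have Q0 : map_poly f Q != 0.
    apply/eqP => hq; move: ef; rewrite hq mul0r => /eqP.
    by rewrite mulf_eq0 polyC_eq0 expf_eq0 (negbTE frho) andbF (negbTE hg0).
  have Qx : fx Q = 0.
    have := congr1 (fun p => p.[x]) ef; rewrite /= hornerM hornerC -fxE rg0 mulr0.
    rewrite hornerM -!fxE => /esym/eqP; rewrite mulf_eq0 (negbTE rx) orbF => /eqP //.
  have hsz : size (map_poly f Q * map_poly f r) = d.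
    by rewrite -ef size_Cmul ?expf_neq0.
  rewrite size_mul // srn in hsz.
  have := hmin Q Q0 Qx; rewrite -hsz.
  have : (0 < size (map_poly f Q))%N by rewrite size_poly_gt0.
  move: n1; clear; move: (size _) => a; lia.
have ss0 : (size (map_poly f s0) < n)%N.
  by rewrite -srn -sr'; exact: (leq_ltn_trans (size_map_leq f s0) ss).
have [U' [V' [D' [hD' he']]]] := IH _ ss0 s0 erefl hs0 (ltn_trans ss0 nd).
exists (- (U' * Q)), (U' * (rho ^+ k)%:P + V'), D'; split => //.
have -> : - (U' * Q) * r + (U' * (rho ^+ k)%:P + V') * g0 - D'%:P =
   (U' * s0 + V' * g0 - D'%:P) + U' * Q * (r' - r).
  have -> : s0 = (rho ^+ k)%:P * g0 - Q * r' by rewrite e addrC addKr.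
  ring.
by rewrite rmorphD /= he' add0r !rmorphM rmorphB /= tr_map subrr mulr0.
Qed.
End Key.

Lemma hm_ker (L : fieldType) (g : {rmorphism A -> L}) (a : L) :
  (forall b, f b = 0 -> g b = 0) -> forall h, map_poly f h = 0 -> hm g a h = 0.
Proof. by move=> hk h hh; rewrite /horner_morph (kerP hk h hh) horner0. Qed.

Lemma comp_ker (k L : fieldType) (psi : {rmorphism A -> k}) (i : {rmorphism k -> L}) :
  (forall b, f b = 0 -> psi b = 0) -> forall b, f b = 0 -> (i \o psi) b = 0.
Proof. by move=> hk b /hk /= ->; rewrite rmorph0. Qed.

Lemma good_step : good f -> good (hm f x).
Proof.
move=> hg cs hcs.
case: (classic (exists g : {poly A}, map_poly f g != 0 /\ fx g = 0)) => [hex | hnex].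
  have [g [h1 h2]] := hex.
  have [n [[g1 [gn0 [gx sg]]] hminn]] := ex_min
    (fun n => exists g, map_poly f g != 0 /\ fx g = 0 /\ size (map_poly f g) = n)
    (ex_intro _ _ (ex_intro _ g (conj h1 (conj h2 erefl)))).
  clear g h1 h2.
  pose g0 := tr f g1.
  have g0f : map_poly f g0 = map_poly f g1 := tr_map f g1.
  have [sg0 lg0] := tr_size gn0.
  have g0n0f : map_poly f g0 != 0 by rewrite g0f.
  have rg0 : fx g0 = 0 by rewrite -[LHS]/((map_poly f g0).[x]) g0f.
  have hmin h : map_poly f h != 0 -> fx h = 0 -> (size (map_poly f g0) <= size (map_poly f h))%N.
    by rewrite g0f sg => hn hx; apply: hminn; exists h.
  set l := lead_coef g0 in lg0.
  have fl : f l != 0 by rewrite lg0 lead_coef_eq0.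
  have g0n0 : g0 != 0 by rewrite -size_poly_gt0 sg0 size_poly_gt0.
  have d2 : (1 < size (map_poly f g1))%N.
    by apply: root_size_gt1 gn0 _; apply/eqP; exact: gx.
  have hc c : c \in cs -> exists D, f D != 0 /\ exists k Q r U V,
      (l ^+ k)%:P * c = Q * g0 + r /\ map_poly f (U * r + V * g0 - D%:P) = 0.
    move=> cin.
    have [k [Q [r [e sr]]]] := pdiv_ex c g0 g0n0; rewrite -mul_polyC in e.
    have rf : fx r != 0.
      have := congr1 fx e; rewrite rmorphD !rmorphM /= rg0 mulr0 add0r horner_morphC => <-.
      rewrite mulf_neq0 //; [by rewrite rmorphXn expf_neq0 | exact: (hcs c cin)].
    have rfn0 : map_poly f r != 0.
      by apply: contra rf => /eqP h; rewrite -[fx r]/((map_poly f r).[x]) h horner0.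
    have srd : (size (map_poly f r) < size (map_poly f g0))%N.
      by rewrite g0f -sg0; exact: (leq_ltn_trans (size_map_leq f r) sr).
    have [U [V [D [hD he]]]] := @key g0 g0n0f rg0 hmin _ r erefl rfn0 srd.
    by exists D; split => //; exists k, Q, r, U, V.
  have [Ds [hDs1 hDs2]] := choose_list hc.
  have [k [psi [hker hnz]]] : exists (k : finFieldType) (psi : {rmorphism A -> k}),
      (forall a, f a = 0 -> psi a = 0) /\ (forall c, c \in l :: Ds -> psi c != 0).
    apply: hg => c; rewrite in_cons => /orP [/eqP ->|/hDs2 [c' [hD _]]] //.
  have psil : psi l != 0 by apply: hnz; rewrite mem_head.
  have spg : size (map_poly psi g0) = size g0 by rewrite size_map_poly_id0.
  have [L [i [a ra]]] : exists (L : finFieldType) (i : {rmorphism k -> L}) (a : L),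
      root (map_poly i (map_poly psi g0)) a by apply: ext_root; rewrite spg sg0.
  pose ps : {rmorphism {poly A} -> L} := hm (i \o psi) a.
  have psE h : ps h = (map_poly i (map_poly psi h)).[a].
    by rewrite -map_poly_comp.
  have psg0 : ps g0 = 0 by rewrite psE; exact/eqP.
  have psC b : ps b%:P = i (psi b) by rewrite psE map_polyC map_polyC hornerC.
  have pskf h : map_poly f h = 0 -> ps h = 0.
    by apply: hm_ker; apply: comp_ker.
  exists L, ps; split.
    move=> h hx.
    have [k' [Q [r [e sr]]]] := pdiv_ex h g0 g0n0; rewrite -mul_polyC in e.
    have rx0 : fx r = 0.
      have := congr1 fx e; rewrite rmorphD !rmorphM /= rg0 mulr0 add0r.
      by rewrite -[fx h]/(hm f x h) hx mulr0.
    have rf0 : map_poly f r = 0.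
      apply/eqP; apply/negP => /negP hn; have := hmin r hn rx0.
      rewrite leqNgt g0f -sg0; move: (leq_ltn_trans (size_map_leq f r) sr) => -> //.
    have := congr1 ps e; rewrite rmorphD !rmorphM /= psg0 (pskf r rf0) mulr0 addr0 psC.
    rewrite rmorphXn rmorphXn /= => /eqP; rewrite mulf_eq0 expf_eq0 fmorph_eq0.
    by rewrite (negbTE psil) andbF /= => /eqP.
  move=> c cin.
  have [D [Din [hD [k' [Q [r [U [V [e he]]]]]]]]] := hDs1 c cin.
  have psD : psi D != 0 by apply: hnz; rewrite in_cons Din orbT.
  have psr : ps r != 0.
    have := pskf _ he; rewrite rmorphB rmorphD !rmorphM /= psg0 mulr0 addr0 psC.
    move=> /eqP; rewrite subr_eq0 => /eqP h.
    by apply/eqP => h0; move: h; rewrite h0 mulr0 => /esym/eqP; rewrite fmorph_eq0 (negbTE psD).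
  have := congr1 ps e; rewrite rmorphD !rmorphM /= psg0 mulr0 add0r => h.
  by apply/eqP => h0; move: h; rewrite h0 mulr0 => /esym/eqP; rewrite (negbTE psr).
have hA g : fx g = 0 -> map_poly f g = 0.
  move=> hg0; apply/eqP; apply/negP => /negP hn; apply: hnex; by exists g.
pose lc (c : {poly A}) := c`_(size (map_poly f c)).-1.
have hlc c : c \in cs -> f (lc c) != 0.
  move=> cin; rewrite -coef_map -lead_coefE lead_coef_eq0.
  apply: contra (hcs c cin) => /eqP h; apply/eqP; rewrite -[LHS]/((map_poly f c).[x]) h horner0 //.
have [k [psi [hker hnz]]] : exists (k : finFieldType) (psi : {rmorphism A -> k}),
    (forall a, f a = 0 -> psi a = 0) /\ (forall c, c \in map lc cs -> psi c != 0).
  by apply: hg => c /mapP [c' c'in ->]; apply: hlc.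
have hcpsi c : c \in cs -> map_poly psi c != 0.
  move=> cin; apply/eqP => h; have := hnz (lc c) (map_f lc cin).
  by rewrite -coef_map h coef0 eqxx.
pose P := \prod_(c <- cs) map_poly psi c.
have Pn0 : P != 0 by rewrite prodf_seq_neq0; apply/allP => c cin; exact: hcpsi.
have sQ : (1 < size (P * 'X - 1)%R)%N.
  have sPX : size (P * 'X)%R = (size P).+1 := size_mulX Pn0.
  rewrite size_polyDl; last by rewrite sPX size_polyN size_poly1 ltnS lt0n size_poly_eq0.
  by rewrite sPX ltnS lt0n size_poly_eq0.
have [L [i [a ra]]] := ext_root sQ.
exists L, (hm (i \o psi) a); split.
  by move=> g /hA; apply: hm_ker; apply: comp_ker.
move=> c cin.
move: ra; rewrite /root rmorphB rmorphM /= map_polyX rmorph1 hornerD hornerN hornerM hornerX hornerC.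
rewrite subr_eq0 => /eqP hP.
have : (map_poly i P).[a] != 0 by apply/eqP => h; move: hP; rewrite h mul0r => /esym/eqP; rewrite oner_eq0.
rewrite rmorph_prod horner_prod prodf_seq_neq0 => /allP /(_ c cin) /=.
by rewrite /horner_morph map_poly_comp.
Qed.
End Step.

Lemma good_list (K : fieldType) (xs : seq K) :
  exists (A : comNzRingType) (f : {rmorphism A -> K}), good f /\
    forall y, y \in xs -> exists a, f a = y.
Proof.
elim: xs => [|y xs [A [f [hg hl]]]].
  by exists int, (intr : {rmorphism int -> K}); split => //; apply: good_int.
exists {poly A}, (hm f y); split; first exact: good_step.
move=> z; rewrite in_cons => /orP [/eqP ->|/hl [a <-]].
  by exists 'X; rewrite /= /horner_morph map_polyX hornerX.
by exists a%:P; rewrite /= /horner_morph map_polyC hornerC.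
Qed.

Lemma bern (a N : nat) : (a ^ N * (a + N) <= a * (a + 1) ^ N)%N.
Proof.
elim: N => [|N IH]; first by rewrite !expn0 addn0 muln1 mul1n.
rewrite !expnS.
have h1 : (a * a ^ N * (a + N.+1) <= (a + 1) * (a ^ N * (a + N)))%N.
  have : (a * a ^ N <= a ^ N * (a + N))%N by rewrite mulnC leq_mul2l leq_addr orbT.
  move: (a ^ N)%N => b h; nia.
apply: (leq_trans h1); rewrite [X in (_ <= X)%N]mulnCA leq_mul2l IH orbT //.
Qed.

Import Order.TTheory.
Lemma hamming_eq (X : finType) (g h : X -> X) : (forall x, g x = h x) -> hamming g h = 0.
Proof.
move=> H; rewrite /hamming.
have -> : [set x | g x != h x] = set0 by apply/setP => x; rewrite inE H eqxx in_set0.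
by rewrite cards0 mul0r.
Qed.
Lemma exp_mono (s a N : nat) : (s <= a)%N -> (s ^ N <= a ^ N)%N.
Proof. by move=> h; elim: N => [|N IH]; rewrite ?expn0 // !expnS leq_mul. Qed.

Lemma count_bound (s t M : nat) : (s < t)%N -> (s ^ (t * M) * M <= t ^ (t * M))%N.
Proof.
move=> st; set N := (t * M)%N.
have t0 : (0 < t)%N by apply: leq_ltn_trans st.
have hb := bern t.-1 N.
rewrite addn1 prednK // in hb.
have hs : (s ^ N <= t.-1 ^ N)%N by apply: exp_mono; rewrite -ltnS prednK.
have h1 : (s ^ N * N <= t.-1 * t ^ N)%N.
  apply: leq_trans hb; apply: leq_trans (leq_mul hs (leqnn N)) _.
  by rewrite leq_mul2l leq_addl orbT.
have h2 : (t.-1 * t ^ N <= t * t ^ N)%N by rewrite leq_mul2r leq_pred orbT.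
have h3 := leq_trans h1 h2.
rewrite /N mulnCA -/N leq_pmul2l // in h3.
Qed.

Theorem corollary4p5 (K : fieldType) (n : nat) (hn : (1 <= n)%N) :
  sofic (@mulmx K n n n) (1%:M : 'M[K]_n).
Proof.
move=> F eps heps.
pose IJ := [seq (i, j) | i <- enum 'I_n, j <- enum 'I_n].
have IJP i j : (i, j) \in IJ by apply: allpairs_f; rewrite mem_enum.
pose xs := [seq (B : 'M[K]_n) ij.1 ij.2 | B <- F, ij <- IJ].
have xsP B i j : B \in F -> B i j \in xs.
  by move=> hB; apply: (@allpairs_f _ _ _ (fun (B : 'M[K]_n) ij => B ij.1 ij.2) F IJ B (i, j)).
have [A [f [hg hl]]] := good_list K xs.
pose pre (y : K) : A := epsilon (inhabits 0) (fun a => f a = y).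
have preP y : y \in xs -> f (pre y) = y.
  by move=> h; apply: (epsilon_spec (inhabits 0) (fun a => f a = y)); apply: hl.
pose L (B : 'M[K]_n) : 'M[A]_n := map_mx pre B.
have LP B : B \in F -> map_mx f (L B) = B.
  by move=> hB; apply/matrixP => i j; rewrite !mxE preP // xsP.
pose cs := [seq c <- [seq (L BB.1 ij.1 ij.2 - L BB.2 ij.1 ij.2) |
    BB <- [seq (B1, B2) | B1 <- F, B2 <- F], ij <- IJ] | f c != 0].
have [k [psi [hker hnz]]] := hg cs (fun c => ltac:(by rewrite mem_filter => /andP[])).
pose Phi (B : 'M[K]_n) : 'M[k]_n :=
  map_mx psi (epsilon (inhabits 0) (fun C => map_mx f C = B)).
have wd C1 C2 : map_mx f C1 = map_mx f C2 -> map_mx psi C1 = map_mx psi C2.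
  move=> h; apply/matrixP => i j; move/matrixP: h => /(_ i j); rewrite !mxE.
  move=> /eqP; rewrite -subr_eq0 -rmorphB => /eqP /hker /eqP.
  by rewrite rmorphB subr_eq0 => /eqP.
have PhiE C : Phi (map_mx f C) = map_mx psi C.
  apply: wd; apply: (epsilon_spec (inhabits 0) (fun C' => map_mx f C' = map_mx f C)).
  by exists C.
have Phi1 : Phi 1%:M = 1%:M.
  by have := PhiE 1%:M; rewrite !map_mx1.
have PhiM B1 B2 : B1 \in F -> B2 \in F -> Phi (B1 *m B2) = Phi B1 *m Phi B2.
  by move=> h1 h2; rewrite -(LP B1 h1) -(LP B2 h2) -map_mxM !PhiE map_mxM.
have Phiinj B1 B2 : B1 \in F -> B2 \in F -> B1 != B2 -> Phi B1 != Phi B2.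
  move=> h1 h2 hne.
  have [i [j hij]] : exists i j, B1 i j != B2 i j.
    case: (boolP [exists i, exists j, B1 i j != B2 i j]).
      by move=> /existsP [i /existsP [j h]]; exists i, j.
    move=> /negP hnn; case/negP: hne; apply/eqP/matrixP => i j.
    apply/eqP/negPn/negP => h; apply: hnn; apply/existsP; exists i; apply/existsP; exists j.
    exact: h.
  pose c := L B1 i j - L B2 i j.
  have fc : f c = B1 i j - B2 i j.
    by rewrite rmorphB /= -{2}(LP B1 h1) -{2}(LP B2 h2) !mxE.
  have cin : c \in cs.
    rewrite mem_filter fc subr_eq0 hij /=.
    apply: (@allpairs_f _ _ _ (fun BB ij => L BB.1 ij.1 ij.2 - L BB.2 ij.1 ij.2) _ IJ (B1, B2) (i, j)) => //.
    by apply: (@allpairs_f _ _ _ pair F F B1 B2).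
  rewrite -(LP B1 h1) -(LP B2 h2) !PhiE; apply/eqP => /matrixP /(_ i j).
  rewrite !mxE => /eqP; rewrite -subr_eq0 -rmorphB => /eqP h.
  by move: (hnz c cin); rewrite /c /L !mxE h eqxx.
have [M hM] : exists M : nat, eps^-1 < M%:R.
  by exists (Num.bound eps^-1); apply: archi_boundP; rewrite invr_ge0 ltW.
pose t := #|{: 'M[k]_n}|.
have t0 : (0 < t)%N by apply/card_gt0P; exists 0.
pose N := (t * M)%N.
exists {ffun 'I_N -> 'M[k]_n}, (fun (B : 'M[K]_n) (x : {ffun 'I_N -> 'M[k]_n}) => [ffun u => Phi B *m x u] : {ffun 'I_N -> 'M[k]_n}).
have cX : #|{: {ffun 'I_N -> 'M[k]_n}}| = (t ^ N)%N by rewrite card_ffun card_ord.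
split; first by rewrite cX expn_gt0 t0.
split; first split.
- move=> k1 k2 h1 h2; rewrite hamming_eq ?ltW // => x.
  by apply/ffunP => u; rewrite !ffunE PhiM // mulmxA.
- rewrite hamming_eq ?ltW // => x.
  by apply/ffunP => u; rewrite !ffunE Phi1 mul1mx.
move=> B1 B2 h1 h2 hne; rewrite /hamming.
have hPQ := Phiinj B1 B2 h1 h2 hne.
set P := Phi B1 in hPQ *; set Q := Phi B2 in hPQ *.
pose S := [set y : 'M[k]_n | P *m y == Q *m y].
have st : (#|S| < t)%N.
  rewrite /t -cardsT; apply: proper_card; rewrite properT; apply/negP => /eqP hS.
  have : 1%:M \in S by rewrite hS inE.
  by rewrite inE !mulmx1 (negbTE hPQ).
have cgood : #|[set x : {ffun 'I_N -> 'M[k]_n} | [ffun u => P *m x u] == [ffun u => Q *m x u]]|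
    = (#|S| ^ N)%N.
  rewrite -[in RHS](card_ord N) -card_ffun_on; apply: eq_card => x; rewrite inE.
  apply/eqP/ffun_onP => [h u | h].
    by move/ffunP: h => /(_ u); rewrite !ffunE inE => ->.
  by apply/ffunP => u; rewrite !ffunE; move: (h u); rewrite inE => /eqP.
have cbad : #|[set x : {ffun 'I_N -> 'M[k]_n} | [ffun u => P *m x u] != [ffun u => Q *m x u]]|
    = (t ^ N - #|S| ^ N)%N.
  rewrite -cX -cgood -(cardsC [set x : {ffun 'I_N -> 'M[k]_n} | [ffun u => P *m x u] == [ffun u => Q *m x u]]) addKn.
  by apply: eq_card => x; rewrite !inE.
rewrite cbad cX.
have hsN : (#|S| ^ N <= t ^ N)%N by apply: exp_mono; apply: ltnW.
have hb := @count_bound _ _ M st; rewrite -/N in hb.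
have b0 : (0 < t ^ N)%N by rewrite expn_gt0 t0.
rewrite natrB // ler_pdivlMr ?ltr0n //.
move: hb hsN b0; move: (#|S| ^ N)%N (t ^ N)%N => a b hb hab b0.
have hb' : a%:R * M%:R <= b%:R :> rat by rewrite -natrM ler_nat.
have em : 1 < eps * M%:R.
  have h := hM; rewrite -(ltr_pM2l heps) in h.
  by rewrite mulfV ?gt_eqF in h.
have a0 : 0 <= a%:R :> rat := ler0n _ _.
have bb0 : 0 < b%:R :> rat by rewrite ltr0n.
have M0 : 0 <= M%:R :> rat := ler0n _ _.
move: hb' em a0 bb0 M0; move: (a%:R) (b%:R) (M%:R) => a' b' M' *.
nra.
Qed.
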